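(* Let $n,p\ge1$ be integers and let $\mathbf{A}^{p+1}_{n+1}$ be as defined in the context. Then: (a) for every $a\in A$, $a\vee\sim(a^p)\ge\langle(0,0),p\rangle$ (i.e. $a\vee\sim(a^p)\in\mathrm{Rad}(\mathbf{A}^{p+1}_{n+1})={\uparrow}\langle(0,0),p\rangle$); (b) if $p\le n$, then for every $a\in A$: $a\not\ge\langle(0,0),p\rangle$ if and only if $a^{n+1}=\bot$; (c) if $n<p$, then $\langle(n-1,0),p-1\rangle^{p-1}=\sim\langle(n-1,0),p-1\rangle$, and for every $a\in A$: $a\not\ge\langle(0,0),p\rangle$ if and only if $a^{p}=\bot$.
   Context: Order $\mathbb{Z}\times\mathbb{Z}$ lexicographically: $(m,r)\preccurlyeq(k,s)$ iff $m<k$, or $m=k$ and $r\le s$; addition/subtraction of pairs is componentwise, and $\min,\max$ of pairs refer to $\preccurlyeq$. For an integer $n\ge1$ let $L^\omega_{n+1}=\{(m,r)\in\mathbb{Z}^2:(0,0)\preccurlyeq(m,r)\preccurlyeq(n,0)\}$ with $x\ast y=\max\{(0,0),x+y-(n,0)\}$ and $x\to y=\min\{(n,0),(n,0)-x+y\}$. For an integer $p\ge1$ let $L_{p+1}=\{0,1,\dots,p\}$ with $\alpha\ast\beta=\max\{0,\alpha+\beta-p\}$. Define $$A=A^{p+1}_{n+1}=\{\langle(m,r),\alpha\rangle:(m,r)\in L^\omega_{n+1},\ \alpha\in\{0,p\}\}\cup\{\langle(m,r),\alpha\rangle:(0,0)\preccurlyeq(m,r)\preccurlyeq(n-1,0),\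 0<\alpha<p\}.$$ Order: $\langle(m,r),\alpha\rangle\le\langle(k,s),\beta\rangle$ iff one of: (o1) $\alpha\neq0$, $\alpha\le\beta$ and $(m,r)\preccurlyeq(k,s)$; (o2) $\alpha=\beta=0$ and $(k,s)\preccurlyeq(m,r)$; (o3) $\alpha=0$, $\beta\ne0$ and $(n-1,0)\preccurlyeq(m+k,r+s)$. $\wedge,\vee$ denote meet and join for $\le$. Put $\bot=\langle(n,0),0\rangle$, $\top=\langle(n,0),p\rangle$. For $a=\langle(m,r),\alpha\rangle$, $b=\langle(k,s),\beta\rangle\in A$ define $a\odot b$ by: (P1) if $\alpha,\beta\ge1$ and $\alpha+\beta>p$: $a\odot b=\langle(m,r)\ast(k,s),\alpha+\beta-p\rangle$; (P2) if $\alpha,\beta\ge1$ and $\alpha+\beta\le p$: $a\odot b=\langle\min\{(n,0),(2n-(m+k+1),-(r+s))\},0\rangle$; (P3) if $\alpha\ge1$, $\beta=0$: $a\odot b=\langle(m,r)\to(k,s),0\rangle$, and if $\alpha=0$, $\beta\ge1$: $a\odot b=\langle(k,s)\to(m,r),0\rangle$; (P4) if $\alpha=\beta=0$: $a\odot b=\langle\min\{(n,0),(m+k+1,r+s)\},0\rangle$. Define $\sim\langle(m,r),\alpha\rangle=\langle(m,r),p-\alpha\rangle$ if $\alpha\in\{0,p\}$, and $\sim\langle(m,r),\alpha\rangle=\langle(n-1-m,-r),p-\alpha\rangle$ if $0<\alpha<p$. Define $a\Rightarrow b=\sim(a\odot\sim b)$. The algebra $\mathbf{A}^{p+1}_{n+1}$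 is $\langle A;\odot,\Rightarrow,\wedge,\vee,\bot,\top\rangle$. Powers: $a^0=\top$, $a^{k+1}=a\odot a^k$. $\mathrm{Rad}$ denotes the intersection of the maximal proper implicative filters (subsets containing $\top$, closed under $\odot$, upward closed, different from $A$). *)

(* Defs.v *)
From Stdlib Require Import ZArith Lia Bool.
Open Scope Z_scope.
Open Scope bool_scope.

Definition pair := (Z * Z)%type.

Definition lexleb (x y : pair) : bool :=
  (fst x <? fst y) || ((fst x =? fst y) && (snd x <=? snd y)).
Definition lexle (x y : pair) : Prop := lexleb x y = true.

Definition padd (x y : pair) : pair := (fst x + fst y, snd x + snd y).
Definition psub (x y : pair) : pair := (fst x - fst y, snd x - snd y).
Definition pmin (x y : pair) : pair := if lexleb x y then x else y.
Definition pmax (x y : pair) : pair := if lexleb x y then y else x.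

Section Alg.
Variables n p : nat.
Let N : Z := Z.of_nat n.
Let P : Z := Z.of_nat p.

Definition lstar (x y : pair) : pair := pmax (0, 0) (psub (padd x y) (N, 0)).
Definition limp (x y : pair) : pair := pmin (N, 0) (padd (psub (N, 0) x) y).

(* elements <(m,r),alpha> of A are represented as (m, r, alpha) *)
Definition elt := (pair * Z)%type.

Definition inA (a : elt) : Prop :=
  let (x, al) := a in
  (lexle (0, 0) x /\ lexle x (N, 0) /\ (al = 0 \/ al = P)) \/
  (lexle (0, 0) x /\ lexle x (N - 1, 0) /\ 0 < al < P).

Definition leA (a b : elt) : Prop :=
  let (x, al) := a in let (y, be) := b in
  (al <> 0 /\ al <= be /\ lexle x y) \/
  (al = 0 /\ be = 0 /\ lexle y x) \/
  (al = 0 /\ be <> 0 /\ lexle (N - 1, 0) (padd x y)).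

Definition botA : elt := ((N, 0), 0).
Definition topA : elt := ((N, 0), P).

Definition prodA (a b : elt) : elt :=
  let (x, al) := a in let (y, be) := b in
  if (1 <=? al) && (1 <=? be) then
    if P <? al + be then (lstar x y, al + be - P)
    else (pmin (N, 0) (2 * N - (fst x + fst y + 1), - (snd x + snd y)), 0)
  else if (1 <=? al) then (limp x y, 0)
  else if (1 <=? be) then (limp y x, 0)
  else (pmin (N, 0) (fst x + fst y + 1, snd x + snd y), 0).

Definition negA (a : elt) : elt :=
  let (x, al) := a in
  if (al =? 0) || (al =? P) then (x, P - al)
  else ((N - 1 - fst x, - snd x), P - al).

Definition impA (a b : elt) : elt := negA (prodA a (negA b)).

Fixpoint powA (a : elt) (k : nat) : elt :=
  match k with
  | O => topA
  | S k' => prodA a (powA a k')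
  end.

Definition is_joinA (a b j : elt) : Prop :=
  inA j /\ leA a j /\ leA b j /\
  (forall u, inA u -> leA a u -> leA b u -> leA j u).

End Alg.

(* Main.v *)
Require Import Defs.
From Stdlib Require Import ZArith Lia Bool.
Open Scope Z_scope.

Lemma lexleb_t x y : lexleb x y = true <-> fst x < fst y \/ (fst x = fst y /\ snd x <= snd y).
Proof. unfold lexleb. rewrite orb_true_iff, andb_true_iff, Z.ltb_lt, Z.eqb_eq, Z.leb_le. tauto. Qed.
Lemma lexleb_f x y : lexleb x y = false <-> fst y < fst x \/ (fst x = fst y /\ snd y < snd x).
Proof. destruct (lexleb x y) eqn:E.
 - apply lexleb_t in E. split; intro; [discriminate|lia].
 - split; intros _; [|auto]. unfold lexleb in E. rewrite orb_false_iff, andb_false_iff, Z.ltb_ge, Z.eqb_neq, Z.leb_gt in E. lia. Qed.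

Ltac zcase := match goal with
 | |- context [Z.ltb ?a ?b] => destruct (Z.ltb_spec a b)
 | |- context [Z.leb ?a ?b] => destruct (Z.leb_spec a b)
 | |- context [Z.eqb ?a ?b] => destruct (Z.eqb_spec a b)
 | H: context [Z.ltb ?a ?b] |- _ => destruct (Z.ltb_spec a b)
 | H: context [Z.leb ?a ?b] |- _ => destruct (Z.leb_spec a b)
 | H: context [Z.eqb ?a ?b] |- _ => destruct (Z.eqb_spec a b)
 | |- context [if lexleb ?x ?y then _ else _] => let E := fresh "E" in destruct (lexleb x y) eqn:E
 | H: context [if lexleb ?x ?y then _ else _] |- _ => let E := fresh "E" in destruct (lexleb x y) eqn:E
 end.

Ltac conv := repeat match goal with
 | H : lexleb _ _ = true |- _ => apply lexleb_t in H
 | H : lexleb _ _ = false |- _ => apply lexleb_f in H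
 | |- lexleb _ _ = true => apply lexleb_t
 end; cbn [fst snd andb orb] in *.

Ltac unf := unfold inA, leA, lexle, prodA, negA, lstar, limp, pmin, pmax, padd, psub, botA, topA in *; cbn [fst snd andb orb] in *.
Ltac crush := unf; repeat (zcase; cbn [fst snd andb orb] in *); repeat rewrite lexleb_t in *; repeat rewrite lexleb_f in *; cbn [fst snd andb orb] in *; lia.

Lemma inA_cases n p m r al : inA n p ((m, r), al) ->
  (al = 0 /\ lexle (0,0) (m,r) /\ lexle (m,r) (Z.of_nat n, 0)) \/
  (0 < al < Z.of_nat p /\ lexle (0,0) (m,r) /\ lexle (m,r) (Z.of_nat n - 1, 0)) \/
  (al = Z.of_nat p /\ lexle (0,0) (m,r) /\ lexle (m,r) (Z.of_nat n, 0)).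
Proof. unfold inA. intuition. Qed.

Ltac splitA := repeat match goal with
 | H : inA _ _ ((_, _), ?al) |- _ =>
   apply inA_cases in H; destruct H as [[? [? ?]]|[[? [? ?]]|[? [? ?]]]]; try subst al
 end.

Ltac zc := match goal with
 | |- context [Z.ltb ?a ?b] => destruct (Z.ltb_spec a b)
 | |- context [Z.leb ?a ?b] => destruct (Z.leb_spec a b)
 | |- context [Z.eqb ?a ?b] => destruct (Z.eqb_spec a b)
 | H: context [Z.ltb ?a ?b] |- _ => destruct (Z.ltb_spec a b)
 | H: context [Z.leb ?a ?b] |- _ => destruct (Z.leb_spec a b)
 | H: context [Z.eqb ?a ?b] |- _ => destruct (Z.eqb_spec a b)
 end; cbn [fst snd andb orb] in *; try (exfalso; lia).
Ltac lc := match goal with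
 | |- context [if lexleb ?x ?y then _ else _] => let E := fresh "E" in destruct (lexleb x y) eqn:E
 | H: context [if lexleb ?x ?y then _ else _] |- _ => let E := fresh "E" in destruct (lexleb x y) eqn:E
 end; cbn [fst snd andb orb] in *.
Ltac unf2 := unfold inA, leA, prodA, negA, lstar, limp, pmin, pmax, padd, psub, botA, topA in *; cbn [fst snd andb orb] in *.
Ltac fin := unfold lexle in *; repeat rewrite lexleb_t in *; repeat rewrite lexleb_f in *; cbn [fst snd andb orb] in *; lia.
Ltac crush2 := unf2; repeat zc; repeat lc; fin.
Ltac dh := repeat match goal with
 | H : _ /\ _ |- _ => destruct H
 | H : _ \/ _ |- _ => destruct H
 end.
Ltac fin2 := unfold lexle in *; repeat rewrite lexleb_t in *; repeat rewrite lexleb_f in *; cbn [fst snd andb orb] in *; dh; lia.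
Ltac clear_disj := repeat match goal with H : _ \/ _ |- _ => clear H end.
Ltac dconj := repeat match goal with H : _ /\ _ |- _ => destruct H end.
Ltac lazy_solve := first [ solve [clear_disj; lia] | lazymatch goal with H : _ \/ _ |- _ => destruct H as [H|H]; dconj; lazy_solve end ].
Ltac fin3 := unfold lexle in *; repeat rewrite lexleb_t in *; repeat rewrite lexleb_f in *; cbn [fst snd andb orb] in *; dconj; lazy_solve.

Ltac pairs := repeat match goal with |- (_, _) = (_, _) => f_equal end.
Ltac eqsolve := unf2; repeat zc; repeat lc; unfold lexle in *; repeat rewrite lexleb_t in *;
  repeat rewrite lexleb_f in *; cbn [fst snd andb orb] in *; dconj; pairs; lazy_solve.

Lemma prod_closed n p a b : (1 <= n)%nat -> (1 <= p)%nat -> inA n p a -> inA n p b -> inA n p (prodA n p a b).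
Proof.
  intros hn hp ha hb. destruct a as [[m r] al], b as [[k s] be].
  splitA; unf2; repeat zc; repeat lc; fin3.
Qed.

Lemma top_in n p : (1 <= n)%nat -> (1 <= p)%nat -> inA n p (topA n p).
Proof. intros. unfold topA. unf2. fin3. Qed.

Lemma pow_in n p a k : (1 <= n)%nat -> (1 <= p)%nat -> inA n p a -> inA n p (powA n p a k).
Proof. intros. induction k; cbn [powA]; [apply top_in|apply prod_closed]; auto. Qed.

Lemma step n p a c w g t b : (1 <= n)%nat -> (1 <= p)%nat -> inA n p a -> inA n p c ->
  inA n p ((w,0),g) -> inA n p ((t,0),b) ->
  leA n a ((w,0),g) -> leA n c ((t,0),b) -> leA n (prodA n p a c) (prodA n p ((w,0),g) ((t,0),b)).
Proof.
  intros hn hp ha hc hb hd hab hcd. destruct a as [[m r] al], c as [[u v] ga].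
  splitA.
  all: unfold leA in hab, hcd; destruct hab as [hab|[hab|hab]]; try (exfalso; lia);
   destruct hcd as [hcd|[hcd|hcd]]; try (exfalso; lia).
  all: unf2; repeat zc.
  all: repeat lc.
  all: fin3.
Qed.

Lemma pow_mono n p a w g0 : (1 <= n)%nat -> (1 <= p)%nat -> inA n p a -> inA n p ((w,0),g0) ->
  (forall k, exists t g, powA n p ((w,0),g0) k = ((t,0),g)) ->
  leA n a ((w,0),g0) -> forall k, leA n (powA n p a k) (powA n p ((w,0),g0) k).
Proof.
  intros hn hp ha hb hf hab k. induction k as [|k IH].
  - cbn [powA]. unfold topA. unf2. fin3.
  - cbn [powA]. destruct (hf k) as [t [g Ht]]. rewrite Ht in *.
    apply step; auto. apply pow_in; auto. rewrite <- Ht. apply pow_in; auto.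
Qed.

Lemma pow_e_lo n p k : (1 <= n)%nat -> (2 <= p)%nat -> (k <= p - 1)%nat ->
  powA n p ((Z.of_nat n - 1, 0), Z.of_nat p - 1) k
  = ((Z.max 0 (Z.of_nat n - Z.of_nat k), 0), Z.of_nat p - Z.of_nat k).
Proof.
  intros hn hp. induction k as [|k IH]; intros hk.
  - cbn [powA]. unfold topA. pairs; lia.
  - cbn [powA]. rewrite IH by lia. eqsolve.
Qed.

Lemma pow_e_hi n p j : (1 <= n)%nat -> (2 <= p)%nat ->
  powA n p ((Z.of_nat n - 1, 0), Z.of_nat p - 1) (p + j)
  = ((Z.min (Z.of_nat n) (Z.of_nat n - Z.max 0 (Z.of_nat n - Z.of_nat p + 1) + Z.of_nat j), 0), 0).
Proof.
  intros hn hp. induction j as [|j IH].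
  - replace (p + 0)%nat with (S (p - 1)) by lia. cbn [powA].
    rewrite pow_e_lo by lia. eqsolve.
  - rewrite Nat.add_succ_r. cbn [powA]. rewrite IH. eqsolve.
Qed.

Lemma pow_z n p k : (1 <= n)%nat -> (1 <= p)%nat ->
  powA n p ((0, 0), 0) (S k) = ((Z.min (Z.of_nat n) (Z.of_nat k), 0), 0).
Proof.
  intros hn hp. induction k as [|k IH].
  - cbn [powA]. eqsolve.
  - cbn [powA] in *. rewrite IH. eqsolve.
Qed.

Lemma e_form n p : (1 <= n)%nat -> (2 <= p)%nat ->
  forall k, exists t g, powA n p ((Z.of_nat n - 1, 0), Z.of_nat p - 1) k = ((t,0),g).
Proof.
  intros hn hp k. destruct (Nat.le_gt_cases k (p - 1)) as [h|h].
  - rewrite pow_e_lo by lia. eauto.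
  - replace k with (p + (k - p))%nat by lia. rewrite pow_e_hi by lia. eauto.
Qed.

Lemma z_form n p : (1 <= n)%nat -> (1 <= p)%nat ->
  forall k, exists t g, powA n p ((0, 0), 0) k = ((t,0),g).
Proof.
  intros hn hp [|k].
  - cbn. unfold topA. eauto.
  - rewrite pow_z by lia. eauto.
Qed.

Lemma e_in n p : (1 <= n)%nat -> (2 <= p)%nat -> inA n p ((Z.of_nat n - 1, 0), Z.of_nat p - 1).
Proof. intros. unf2. fin3. Qed.

Lemma z_in n p : (1 <= n)%nat -> (1 <= p)%nat -> inA n p ((0, 0), 0).
Proof. intros. unf2. fin3. Qed.

Lemma le_e n p a : (1 <= n)%nat -> (2 <= p)%nat -> inA n p a -> snd a < Z.of_nat p ->
  leA n a ((Z.of_nat n - 1, 0), Z.of_nat p - 1).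
Proof. intros hn hp ha hs. destruct a as [[m r] al]. cbn in hs. splitA; unf2; fin3. Qed.

Lemma le_z n p a : (1 <= n)%nat -> (1 <= p)%nat -> inA n p a -> snd a = 0 ->
  leA n a ((0, 0), 0).
Proof. intros hn hp ha hs. destruct a as [[m r] al]. cbn in hs. splitA; unf2; fin3. Qed.

Lemma le_bot n p u : (1 <= n)%nat -> (1 <= p)%nat -> inA n p u -> leA n u (botA n) -> u = botA n.
Proof. intros hn hp hu h. destruct u as [[m r] al]. splitA; unfold botA in *; unf2; dconj; pairs; fin3. Qed.

Lemma le_neg n p u t : (1 <= n)%nat -> (1 <= p)%nat -> inA n p u -> leA n u ((t,0),0) -> snd u = 0.
Proof. intros hn hp hu h. destruct u as [[m r] al]. cbn. splitA; unf2; fin3. Qed.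

Lemma rad_snd n p a : (1 <= n)%nat -> (1 <= p)%nat -> inA n p a -> leA n ((0,0), Z.of_nat p) a -> snd a = Z.of_nat p.
Proof. intros hn hp ha h. destruct a as [[m r] al]. cbn. splitA; unf2; fin3. Qed.

Lemma snd_rad n p a : (1 <= n)%nat -> (1 <= p)%nat -> inA n p a -> snd a = Z.of_nat p -> leA n ((0,0), Z.of_nat p) a.
Proof. intros hn hp ha h. destruct a as [[m r] al]. cbn in h. splitA; unf2; fin3. Qed.

Lemma pow_P n p a k : (1 <= n)%nat -> (1 <= p)%nat -> snd a = Z.of_nat p -> snd (powA n p a k) = Z.of_nat p.
Proof.
  intros hn hp ha. induction k as [|k IH]; cbn [powA]; [reflexivity|].
  destruct a as [x al], (powA n p (x, al) k) as [y be]. cbn in *. subst.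
  unfold prodA. repeat zc. cbn. lia.
Qed.

Definition joinA (n : nat) (a b : elt) : elt :=
  let (x, al) := a in let (y, be) := b in
  if (al =? 0) && (be =? 0) then (pmin x y, 0)
  else if al =? 0 then (pmax y (psub (Z.of_nat n - 1, 0) x), be)
  else if be =? 0 then (pmax x (psub (Z.of_nat n - 1, 0) y), al)
  else (pmax x y, Z.max al be).

Lemma join_ok n p a b : (1 <= n)%nat -> (1 <= p)%nat -> inA n p a -> inA n p b ->
  is_joinA n p a b (joinA n a b).
Proof.
  intros hn hp ha hb. destruct a as [[m r] al], b as [[k s] be].
  unfold is_joinA. split; [|split; [|split]].
  - splitA; unfold joinA; unf2; repeat zc; repeat lc; fin3.
  - splitA; unfold joinA; unf2; repeat zc; repeat lc; fin3.
  - splitA; unfold joinA; unf2; repeat zc; repeat lc; fin3.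
  - intros [[u v] ga] hu h1 h2. splitA; unfold leA in h1, h2; unfold joinA; unf2; repeat zc; repeat lc; fin3.
Qed.

Lemma join_snd n p a b : (1 <= n)%nat -> (1 <= p)%nat -> inA n p a -> inA n p b ->
  (snd a = Z.of_nat p \/ snd b = Z.of_nat p) -> snd (joinA n a b) = Z.of_nat p.
Proof.
  intros hn hp ha hb h. destruct a as [[m r] al], b as [[k s] be]. cbn in h.
  splitA; unfold joinA; repeat zc; cbn; lia.
Qed.

Lemma nonrad_pow n p a K : (1 <= n)%nat -> (1 <= p)%nat -> inA n p a -> snd a < Z.of_nat p ->
  ((2 <= p)%nat -> powA n p ((Z.of_nat n - 1, 0), Z.of_nat p - 1) K = botA n) ->
  powA n p ((0,0),0) K = botA n -> powA n p a K = botA n.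
Proof.
  intros hn hp ha hs he hz. destruct a as [[m r] al] eqn:Ea. cbn in hs.
  assert (al = 0 \/ (2 <= p)%nat) as [h0|h2].
  { apply inA_cases in ha. lia. }
  - apply (le_bot n p); [exact hn|exact hp|apply pow_in; auto|]. rewrite <- hz.
    apply pow_mono; auto. apply z_in; auto. apply z_form; auto.
    rewrite <- Ea. apply (le_z n p); subst; auto.
  - apply (le_bot n p); [exact hn|exact hp|apply pow_in; auto|]. rewrite <- (he h2).
    apply pow_mono; auto. apply e_in; auto. apply e_form; auto.
    rewrite <- Ea. apply (le_e n p); subst; auto.
Qed.

Lemma nonrad_snd n p a : (1 <= n)%nat -> (1 <= p)%nat -> inA n p a -> snd a < Z.of_nat p ->
  snd (powA n p a p) = 0.
Proof.
  intros hn hp ha hs. destruct a as [[m r] al] eqn:Ea. cbn in hs.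
  assert (al = 0 \/ (2 <= p)%nat) as [h0|h2].
  { apply inA_cases in ha. lia. }
  - assert (H := pow_mono n p a 0 0 hn hp). subst a.
    specialize (H ha (z_in n p hn hp) (z_form n p hn hp)).
    pose proof (pow_z n p (p - 1) hn hp) as Hz. replace (S (p - 1)) with p in Hz by lia.
    assert (Hle := H (le_z n p _ hn hp ha h0) p). rewrite Hz in Hle.
    eapply le_neg; [exact hn|exact hp|apply pow_in; auto|exact Hle].
  - assert (H := pow_mono n p a (Z.of_nat n - 1) (Z.of_nat p - 1) hn hp). subst a.
    specialize (H ha (e_in n p hn h2) (e_form n p hn h2)).
    pose proof (pow_e_hi n p 0 hn h2) as Hz. replace (p + 0)%nat with p in Hz by lia.
    assert (Hle := H (le_e n p _ hn h2 ha hs) p). rewrite Hz in Hle.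
    eapply le_neg; [exact hn|exact hp|apply pow_in; auto|exact Hle].
Qed.

Theorem theorem3p4 (n p : nat) (hn : (1 <= n)%nat) (hp : (1 <= p)%nat) :
  (* (a) *)
  (forall a, inA n p a ->
     exists j, is_joinA n p a (negA n p (powA n p a p)) j /\
               leA n ((0, 0), Z.of_nat p) j) /\
  (* (b) *)
  ((p <= n)%nat ->
     forall a, inA n p a ->
       (~ leA n ((0, 0), Z.of_nat p) a <-> powA n p a (n + 1) = botA n)) /\
  (* (c) *)
  ((n < p)%nat ->
     powA n p ((Z.of_nat n - 1, 0), Z.of_nat p - 1) (p - 1)
       = negA n p ((Z.of_nat n - 1, 0), Z.of_nat p - 1) /\
     forall a, inA n p a ->
       (~ leA n ((0, 0), Z.of_nat p) a <-> powA n p a p = botA n)).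
Proof.
  assert (gen : forall K, (1 <= K)%nat ->
     ((2 <= p)%nat -> powA n p ((Z.of_nat n - 1, 0), Z.of_nat p - 1) K = botA n) ->
     powA n p ((0,0),0) K = botA n ->
     forall a, inA n p a ->
       (~ leA n ((0, 0), Z.of_nat p) a <-> powA n p a K = botA n)).
  { intros K hK he hz a ha. split.
    - intros hnr. apply nonrad_pow; auto.
      assert (snd a <> Z.of_nat p) by (intro; apply hnr; apply snd_rad; auto).
      destruct a as [[m r] al]. apply inA_cases in ha. cbn in *. lia.
    - intros hb hr. apply rad_snd in hr; auto.
      assert (snd (powA n p a K) = Z.of_nat p) by (apply pow_P; auto).
      rewrite hb in H. unfold botA in H. cbn in H. lia. }
  split; [|split].
  - intros a ha. exists (joinA n a (negA n p (powA n p a p))).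
    assert (hpin : inA n p (powA n p a p)) by (apply pow_in; auto).
    assert (hneg : inA n p (negA n p (powA n p a p))).
    { destruct (powA n p a p) as [[m r] al]. splitA; unfold negA; repeat zc; unf2; fin3. }
    split. apply join_ok; auto.
    apply snd_rad; auto. apply join_ok; auto. apply join_snd; auto.
    destruct (Z.eq_dec (snd a) (Z.of_nat p)) as [h|h]; [left; auto|right].
    assert (hs : snd a < Z.of_nat p).
    { destruct a as [[m r] al]. apply inA_cases in ha. cbn in *. lia. }
    assert (h0 := nonrad_snd n p a hn hp ha hs).
    destruct (powA n p a p) as [x al]. cbn in h0. subst al. unfold negA. cbn. lia.
  - intros hpn. apply gen; [lia| |].
    + intros h2. replace (n + 1)%nat with (p + (n + 1 - p))%nat by lia.
      rewrite pow_e_hi by lia. unfold botA. pairs; lia.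
    + replace (n + 1)%nat with (S n) by lia. rewrite pow_z by lia. unfold botA. pairs; lia.
  - intros hnp. split.
    + rewrite pow_e_lo by lia. unfold negA. repeat zc. pairs; lia.
    + apply gen; [lia| |].
      * intros h2. pose proof (pow_e_hi n p 0 hn h2) as Hz. rewrite Nat.add_0_r in Hz.
        rewrite Hz. unfold botA. pairs; lia.
      * pose proof (pow_z n p (p - 1) hn hp) as Hz. replace (S (p - 1)) with p in Hz by lia.
        rewrite Hz. unfold botA. pairs; lia.
Qed.
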